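(* Let $\{c_n\}_{n\in\mathbb Z}$ be complex numbers such that $c_n+c_{-n}\in M(\theta_0)$ for all $n\ge1$ for some $\theta_0\in[0,\pi/2)$, and $\{c_n\}_{n\ge0}\in NBVS$. Let $S_n(x)=\sum_{k=-n}^nc_ke^{ikx}$. If $S_n$ converges uniformly on $\mathbb R$ to a (continuous, $2\pi$-periodic) function $f$, i.e. $\lim_{n\to\infty}\|f-S_n\|=0$ with $\|g\|=\max_x|g(x)|$, then $\lim_{n\to\infty}nc_n=0$.
   Context: For $\theta_0\in[0,\pi/2)$ let $M(\theta_0)=\{z\in\mathbb C: |\arg z|\le\theta_0\}$ (with $0\in M(\theta_0)$). Write $\Delta c_n=c_n-c_{n+1}$. A complex sequence $\mathbf C=\{c_n\}$ belongs to $NBVS$ if there is $\theta_0\in[0,\pi/2)$ with $c_n\in M(\theta_0)$ for all $n\ge1$ and a constant $K(\mathbf C)>0$ such that $\sum_{n=m}^{2m}|\Delta c_n|\le K(\mathbf C)\big(|c_m|+|c_{2m}|\big)$ for all $m\ge1$. *)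

(* Defs.v *)
From Stdlib Require Import Reals ZArith.
From Coquelicot Require Import Coquelicot.
Open Scope R_scope.

Definition cexpi (t : R) : C := (cos t, sin t).

(* M(theta0) = { z : |arg z| <= theta0 }, with 0 in M(theta0).
   arg z is the principal argument in (-pi, pi], i.e. the t in (-pi,pi]
   with z = |z| e^{it}; for z = 0 every t qualifies, so 0 is in M. *)
Definition inM (theta0 : R) (z : C) : Prop :=
  exists t : R, - PI < t <= PI /\ Rabs t <= theta0 /\
    z = Cmult (RtoC (Cmod z)) (cexpi t).

Definition Delta (c : nat -> C) (n : nat) : C := Cminus (c n) (c (S n)).

(* NBVS for a sequence {c_n}_{n >= 1} (value at index 0 is irrelevant). *)
Definition NBVS (c : nat -> C) : Prop :=
  exists theta0 : R, 0 <= theta0 < PI / 2 /\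
    (forall n : nat, (1 <= n)%nat -> inM theta0 (c n)) /\
    exists K : R, K > 0 /\
      forall m : nat, (1 <= m)%nat ->
        sum_n_m (fun n => Cmod (Delta c n)) m (2 * m)
          <= K * (Cmod (c m) + Cmod (c (2 * m)%nat)).

Definition Spart (c : Z -> C) (n : nat) (x : R) : C :=
  sum_n_m (fun j : nat =>
      let k := (Z.of_nat j - Z.of_nat n)%Z in
      Cmult (c k) (cexpi (IZR k * x))) 0 (2 * n).

(* Main.v *)
Require Import Defs.
From Stdlib Require Import Reals ZArith.
From Coquelicot Require Import Coquelicot.
From Stdlib Require Import Lia Lra.
Open Scope R_scope.

Lemma Rplus_eq (x y : R) : plus x y = x + y.
Proof. reflexivity. Qed.
Lemma Czero_eq : (zero : C) = RtoC 0.
Proof. reflexivity. Qed.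
Lemma Rzero_eq : (zero : R) = 0.
Proof. reflexivity. Qed.

Ltac rplus := repeat match goal with |- context [@plus ?G ?x ?y] => change (@plus G x y) with (Rplus x y) end.
Ltac rplusH H := repeat match type of H with context [@plus ?G ?x ?y] => change (@plus G x y) with (Rplus x y) in H end.

Lemma le_sqrt_sq (w W : R) : w ^ 2 <= W -> w <= sqrt W.
Proof.
  intros H. apply Rle_trans with (Rabs w). apply Rle_abs.
  rewrite <- sqrt_Rsqr_abs. apply sqrt_le_1_alt. unfold Rsqr. simpl in H. lra.
Qed.

Lemma Im_le_Cmod (z : C) : Im z <= Cmod z.
Proof.
  destruct z as [u v]. unfold Cmod; simpl. apply le_sqrt_sq. simpl. nra.
Qed.

Lemma Re_le_Cmod (z : C) : Re z <= Cmod z.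
Proof.
  destruct z as [u v]. unfold Cmod; simpl. apply le_sqrt_sq. simpl. nra.
Qed.

Lemma sum_lin (f : C -> R) :
  (forall a b, f (Cplus a b) = f a + f b) -> f (RtoC 0) = 0 ->
  forall (F : nat -> C) n m, f (sum_n_m F n m) = sum_n_m (fun k => f (F k)) n m.
Proof.
  intros Hadd H0 F n m. induction m.
  - destruct n. rewrite !sum_n_n. reflexivity.
    rewrite !sum_n_m_zero by lia. exact H0.
  - destruct (le_lt_dec n (S m)).
    + rewrite !sum_n_Sm by lia. rplus. rewrite Hadd, IHm. reflexivity.
    + rewrite !sum_n_m_zero by lia. exact H0.
Qed.

Lemma Re_sum (F : nat -> C) n m : Re (sum_n_m F n m) = sum_n_m (fun k => Re (F k)) n m.
Proof. apply sum_lin; reflexivity. Qed.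
Lemma Im_sum (F : nat -> C) n m : Im (sum_n_m F n m) = sum_n_m (fun k => Im (F k)) n m.
Proof. apply sum_lin; reflexivity. Qed.

Lemma sum_le_loc (a b : nat -> R) n m :
  (forall k, (n <= k <= m)%nat -> a k <= b k) -> sum_n_m a n m <= sum_n_m b n m.
Proof.
  intros H. induction m.
  - destruct n. rewrite !sum_n_n. apply H; lia.
    rewrite !sum_n_m_zero by lia. apply Rle_refl.
  - destruct (le_lt_dec n (S m)).
    + rewrite !sum_n_Sm by lia. rplus.
      destruct (le_lt_dec n m).
      * apply Rplus_le_compat. apply IHm. intros; apply H; lia. apply H; lia.
      * rewrite !sum_n_m_zero by lia. rplus. apply Rplus_le_compat. apply Rle_refl. apply H; lia.
    + rewrite !sum_n_m_zero by lia. apply Rle_refl.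
Qed.

Lemma sum_nonneg (a : nat -> R) n m : (forall k, 0 <= a k) -> 0 <= sum_n_m a n m.
Proof.
  intros H. apply Rle_trans with (sum_n_m (fun _ => 0) n m).
  rewrite sum_n_m_const. lra. apply sum_n_m_le. exact H.
Qed.

Lemma sum_ext_right (a : nat -> R) u v v' : (forall k, 0 <= a k) -> (v <= v')%nat ->
  sum_n_m a u v <= sum_n_m a u v'.
Proof.
  intros H Hv. induction Hv. apply Rle_refl.
  destruct (le_lt_dec u (S m)).
  - rewrite (sum_n_Sm a u m l). rplus. specialize (H (S m)). lra.
  - rewrite (sum_n_m_zero a u m) in IHHv by lia. rewrite (sum_n_m_zero a u (S m) l). exact IHHv.
Qed.

Lemma sum_ext_left (a : nat -> R) u u' v : (forall k, 0 <= a k) -> (u' <= u)%nat ->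
  sum_n_m a u v <= sum_n_m a u' v.
Proof.
  intros H Hu. induction Hu. apply Rle_refl.
  destruct (le_lt_dec (S m) v).
  - assert (Hmv : (m <= v)%nat) by lia.
    rewrite (sum_Sn_m a m v Hmv) in IHHu. rplusH IHHu. specialize (H m). lra.
  - rewrite (sum_n_m_zero a (S m) v l). apply sum_nonneg. exact H.
Qed.

Lemma sum_double (a : nat -> R) u d : (forall k, 0 <= a k) ->
  sum_n_m (fun m => a (2 * m)%nat) u (u + d) <= sum_n_m a (2 * u) (2 * (u + d)).
Proof.
  intros H. induction d.
  - rewrite Nat.add_0_r, !sum_n_n. apply Rle_refl.
  - replace (u + S d)%nat with (S (u + d)) by lia.
    replace (2 * S (u + d))%nat with (S (S (2 * (u + d)))) by lia.
    rewrite (sum_n_Sm (fun m => a (2 * m)%nat) u (u + d) ltac:(lia)).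
    rewrite (sum_n_Sm a (2 * u) (S (2 * (u + d))) ltac:(lia)).
    rewrite (sum_n_Sm a (2 * u) (2 * (u + d)) ltac:(lia)).
    rplus. replace (2 * S (u+d))%nat with (S (S (2 * (u + d)))) by lia.
    specialize (H (S (2 * (u + d)))). rplus. lra.
Qed.

Ltac cplus := repeat match goal with |- context [@plus ?G ?x ?y] => change (@plus G x y) with (Cplus x y) end.

Lemma inM_Re th z : 0 <= th < PI / 2 -> inM th z -> cos th * Cmod z <= Re z.
Proof.
  intros Hth [t [Ht [Hat Hz]]].
  assert (HR : Re z = Cmod z * cos t).
  { rewrite Hz at 1. unfold RtoC, cexpi. simpl. ring. }
  rewrite HR. rewrite Rmult_comm. apply Rmult_le_compat_l. apply Cmod_ge_0.
  assert (Hc : cos t = cos (Rabs t)).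
  { destruct (Rle_dec 0 t). rewrite Rabs_right by lra. reflexivity.
    rewrite Rabs_left by lra. rewrite cos_neg. reflexivity. }
  rewrite Hc. pose proof PI_RGT_0. apply cos_decr_1; try lra. apply Rabs_pos.
Qed.

Definition T (c : Z -> C) (x : R) (k : Z) : C := Cmult (c k) (cexpi (IZR k * x)).
Definition g (c : Z -> C) (x : R) (k : nat) : C :=
  Cplus (T c x (Z.of_nat k)) (T c x (- Z.of_nat k)).

Lemma Spart_S c n x : Spart c (S n) x = Cplus (Spart c n x) (g c x (S n)).
Proof.
  change (sum_n_m (fun j => T c x (Z.of_nat j - Z.of_nat (S n))) 0 (2 * S n) =
    Cplus (sum_n_m (fun j => T c x (Z.of_nat j - Z.of_nat n)) 0 (2*n)) (g c x (S n))).
  replace (2 * S n)%nat with (S (S (2*n))) by lia.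
  rewrite (sum_n_Sm _ 0 (S (2*n)) ltac:(lia)).
  rewrite (sum_Sn_m _ 0 (S (2*n)) ltac:(lia)).
  rewrite <- (sum_n_m_S _ 0 (2*n)).
  rewrite (sum_n_m_ext (fun j => T c x (Z.of_nat (S j) - Z.of_nat (S n)))
     (fun j => T c x (Z.of_nat j - Z.of_nat n))).
  2: { intros j. f_equal. lia. }
  unfold g. replace (Z.of_nat 0 - Z.of_nat (S n))%Z with (- Z.of_nat (S n))%Z by lia.
  replace (Z.of_nat (S (S (2 * n))) - Z.of_nat (S n))%Z with (Z.of_nat (S n)) by lia.
  cplus. match goal with |- ?L = ?R => change (@eq C L R) end. ring.
Qed.

Lemma Spart_diff c n N x : (n <= N)%nat ->
  Spart c N x = Cplus (Spart c n x) (sum_n_m (g c x) (S n) N).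
Proof.
  intros H. induction H.
  - rewrite sum_n_m_zero by lia. change (zero : C) with (RtoC 0). ring.
  - rewrite Spart_S, IHle. rewrite (sum_n_Sm (g c x) (S n) m ltac:(lia)). cplus. ring.
Qed.

Lemma g0_Re c k : Re (g c 0 k) = Re (Cplus (c (Z.of_nat k)) (c (- Z.of_nat k)%Z)).
Proof.
  unfold g, T, cexpi. rewrite !Rmult_0_r, cos_0, sin_0.
  destruct (c (Z.of_nat k)) as [p q]; destruct (c (- Z.of_nat k)%Z) as [p' q'].
  simpl. ring.
Qed.

Lemma g_Im c x k :
  2 * sin (INR k * x) * Re (c (Z.of_nat k)) <=
  Im (g c x k) + Cmod (Cplus (c (Z.of_nat k)) (c (- Z.of_nat k)%Z)).
Proof.
  unfold g, T, cexpi. rewrite opp_IZR, <- INR_IZR_INZ.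
  replace (- INR k * x) with (- (INR k * x)) by ring. rewrite cos_neg, sin_neg.
  set (y := INR k * x).
  destruct (c (Z.of_nat k)) as [p q]; destruct (c (- Z.of_nat k)%Z) as [p' q'].
  unfold Cmod; simpl.
  pose proof (sin2_cos2 y) as Hsc. unfold Rsqr in Hsc.
  assert (Hw : (p + p') * sin y - (q + q') * cos y <= sqrt ((p + p') ^ 2 + (q + q') ^ 2)).
  { apply le_sqrt_sq.
    assert (E : ((p + p') * sin y - (q + q') * cos y)^2 + ((p + p') * cos y + (q + q') * sin y)^2
              = ((p + p') * (p + p') + (q + q') * (q + q')) * (sin y * sin y + cos y * cos y)) by ring.
    rewrite Hsc in E. pose proof (pow2_ge_0 ((p + p') * cos y + (q + q') * sin y)).
    replace ((p + p') ^ 2 + (q + q') ^ 2) with (((p + p') * (p + p') + (q + q') * (q + q')) * 1) by ring.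
    lra. }
  simpl in Hw. lra.
Qed.

Lemma sin_bound n N k : (n < N)%nat -> (N <= 5 * n)%nat -> (S n <= k <= N)%nat ->
  sin (PI / 10) <= sin (INR k * (PI / (2 * INR N))).
Proof.
  intros H1 H2 H3. pose proof PI_RGT_0 as Hpi.
  assert (HN : 0 < INR N) by (apply lt_0_INR; lia).
  assert (HkN : INR k <= INR N) by (apply le_INR; lia).
  assert (H5 : INR N <= 5 * INR k).
  { replace 5 with (INR 5) by (simpl; ring). rewrite <- mult_INR. apply le_INR. lia. }
  set (r := INR k / INR N).
  assert (Hr : r * INR N = INR k) by (unfold r; field; lra).
  assert (Hy : INR k * (PI / (2 * INR N)) = PI / 2 * r) by (unfold r; field; lra).
  rewrite Hy.
  assert (r <= 1) by nra. assert (1/5 <= r) by nra.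
  apply sin_incr_1; nra.
Qed.

Lemma sum_scal (r : R) (u : nat -> R) n m :
  sum_n_m (fun k => r * u k) n m = r * sum_n_m u n m.
Proof. exact (sum_n_m_mult_l r u n m). Qed.

Lemma sum_plusR (u v : nat -> R) n m :
  sum_n_m (fun k => u k + v k) n m = sum_n_m u n m + sum_n_m v n m.
Proof. exact (sum_n_m_plus u v n m). Qed.

Lemma block (c : Z -> C) (f : R -> C) th0 th1 :
  0 <= th0 < PI / 2 ->
  (forall n : nat, (1 <= n)%nat -> inM th0 (Cplus (c (Z.of_nat n)) (c (- Z.of_nat n)%Z))) ->
  0 <= th1 < PI / 2 ->
  (forall n : nat, (1 <= n)%nat -> inM th1 (c (Z.of_nat n))) ->
  (forall eps : R, eps > 0 -> exists N : nat, forall n : nat, (N <= n)%nat ->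
     forall x : R, Cmod (Cminus (f x) (Spart c n x)) <= eps) ->
  forall e, e > 0 -> exists N0, forall n N, (N0 <= n)%nat -> (n < N)%nat -> (N <= 5 * n)%nat ->
    sum_n_m (fun k => Cmod (c (Z.of_nat k))) (S n) N <= e.
Proof.
  intros Hth0 HM0 Hth1 HM1 Hunif e He.
  pose proof PI_RGT_0 as Hpi.
  set (C0 := cos th0). set (C1 := cos th1). set (dl := sin (PI / 10)).
  assert (HC0 : 0 < C0) by (apply cos_gt_0; lra).
  assert (HC1 : 0 < C1) by (apply cos_gt_0; lra).
  assert (Hdl : 0 < dl) by (apply sin_gt_0; lra).
  set (eps := e * dl * C1 * C0 / (C0 + 1)).
  assert (Heps : eps * (C0 + 1) = e * dl * C1 * C0) by (unfold eps; field; lra).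
  assert (Heps0 : eps > 0).
  { unfold eps. apply Rdiv_lt_0_compat; [|lra]. repeat apply Rmult_lt_0_compat; lra. }
  destruct (Hunif eps Heps0) as [N0 HN0]. exists N0.
  intros n N Hn HnN HN5.
  assert (Hg : forall x, Cmod (sum_n_m (g c x) (S n) N) <= 2 * eps).
  { intros x.
    pose proof (HN0 n Hn x) as A1. pose proof (HN0 N ltac:(lia) x) as A2.
    rewrite (Spart_diff c n N x) in A2 by lia.
    set (G := sum_n_m (g c x) (S n) N) in *.
    replace G with (Cminus (Cminus (f x) (Spart c n x)) (Cminus (f x) (Cplus (Spart c n x) G))) by ring.
    eapply Rle_trans. apply Cmod_triangle. rewrite Cmod_opp. lra. }
  set (D := sum_n_m (fun k => Cmod (Cplus (c (Z.of_nat k)) (c (- Z.of_nat k)%Z))) (S n) N).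
  assert (HA : C0 * D <= 2 * eps).
  { unfold D. rewrite <- sum_scal.
    eapply Rle_trans. apply (sum_le_loc _ (fun k => Re (g c 0 k))).
    - intros k Hk. rewrite g0_Re. apply inM_Re. exact Hth0. apply HM0. lia.
    - rewrite <- Re_sum. eapply Rle_trans. apply Re_le_Cmod. apply Hg. }
  set (S0 := sum_n_m (fun k => Cmod (c (Z.of_nat k))) (S n) N).
  set (x := PI / (2 * INR N)).
  assert (HB : 2 * dl * C1 * S0 <= 2 * eps + D).
  { unfold S0. rewrite <- sum_scal.
    eapply Rle_trans. apply (sum_le_loc _ (fun k => 2 * sin (INR k * x) * Re (c (Z.of_nat k)))).
    - intros k Hk. pose proof (sin_bound n N k HnN HN5 Hk) as Hs. fold x dl in Hs.
      pose proof (inM_Re th1 _ Hth1 (HM1 k ltac:(lia))) as HR. fold C1 in HR.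
      pose proof (Cmod_ge_0 (c (Z.of_nat k))).
      assert (0 <= C1 * Cmod (c (Z.of_nat k))) by nra.
      nra.
    - eapply Rle_trans. apply (sum_le_loc _ (fun k => Im (g c x k) +
          Cmod (Cplus (c (Z.of_nat k)) (c (- Z.of_nat k)%Z)))).
      + intros k _. apply g_Im.
      + rewrite sum_plusR. rewrite <- Im_sum. fold D.
        pose proof (Im_le_Cmod (sum_n_m (g c x) (S n) N)). pose proof (Hg x). lra. }
  assert (H3 : dl * C1 * C0 * (S0 - e) <= 0).
  { assert (2 * dl * C1 * S0 * C0 <= 2 * eps * C0 + D * C0) by nra.
    nra. }
  assert (0 < dl * C1 * C0) by (repeat apply Rmult_lt_0_compat; lra).
  nra.
Qed.

Lemma tele (b : nat -> C) m j :
  Cmod (Cminus (b m) (b (m + S j)%nat)) <= sum_n_m (fun n => Cmod (Defs.Delta b n)) m (m + j).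
Proof.
  induction j.
  - rewrite Nat.add_0_r, sum_n_n. unfold Defs.Delta. rewrite Nat.add_1_r. apply Rle_refl.
  - replace (m + S j)%nat with (S (m + j)) by lia.
    rewrite (sum_n_Sm _ m (m + j) ltac:(lia)). rplus.
    replace (m + S (S j))%nat with (S (S (m + j))) by lia.
    replace (Cminus (b m) (b (S (S (m + j)))))
      with (Cplus (Cminus (b m) (b (S (m + j)))) (Defs.Delta b (S (m + j)))).
    2: { unfold Defs.Delta. ring. }
    eapply Rle_trans. apply Cmod_triangle.
    replace (m + S j)%nat with (S (m + j)) in IHj by lia. lra.
Qed.

Lemma nb_point (b : nat -> C) K : K > 0 ->
  (forall m : nat, (1 <= m)%nat ->
        sum_n_m (fun n => Cmod (Defs.Delta b n)) m (2 * m)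
          <= K * (Cmod (b m) + Cmod (b (2 * m)%nat))) ->
  forall m t, (1 <= m)%nat -> (m <= t <= 2 * m)%nat ->
    Cmod (b t) <= (K + 1) * (Cmod (b m) + Cmod (b (2 * m)%nat)).
Proof.
  intros HK HNB m t Hm Ht.
  pose proof (Cmod_ge_0 (b m)). pose proof (Cmod_ge_0 (b (2 * m)%nat)).
  destruct (Nat.eq_dec t m) as [->|Hne].
  - nra.
  - destruct t as [|t']. lia.
    assert (Hj : S t' = (m + S (t' - m))%nat) by lia.
    pose proof (tele b m (t' - m)) as Ht1. rewrite <- Hj in Ht1.
    assert (Hs : sum_n_m (fun n => Cmod (Defs.Delta b n)) m (m + (t' - m)) <=
                 sum_n_m (fun n => Cmod (Defs.Delta b n)) m (2 * m)).
    { apply sum_ext_right. intros; apply Cmod_ge_0. lia. }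
    specialize (HNB m Hm).
    assert (Cmod (b (S t')) <= Cmod (b m) + Cmod (Cminus (b m) (b (S t')))).
    { replace (b (S t')) with (Cplus (b m) (Copp (Cminus (b m) (b (S t'))))) at 1 by ring.
      eapply Rle_trans. apply Cmod_triangle. rewrite Cmod_opp. lra. }
    nra.
Qed.

Theorem lemma2 (c : Z -> C) (f : R -> C) :
  (exists theta0 : R, 0 <= theta0 < PI / 2 /\
     forall n : nat, (1 <= n)%nat ->
       inM theta0 (Cplus (c (Z.of_nat n)) (c (- Z.of_nat n)%Z))) ->
  NBVS (fun n : nat => c (Z.of_nat n)) ->
  (* uniform convergence on R: sup_x |f x - S_n x| -> 0 *)
  (forall eps : R, eps > 0 -> exists N : nat, forall n : nat, (N <= n)%nat ->
     forall x : R, Cmod (Cminus (f x) (Spart c n x)) <= eps) ->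
  is_lim_seq (fun n : nat => Cmod (Cmult (RtoC (INR n)) (c (Z.of_nat n)))) 0.
Proof.
  intros [th0 [Hth0 HM0]] [th1 [Hth1 [HM1 [K [HK HNB]]]]] Hunif.
  set (a := fun n : nat => Cmod (c (Z.of_nat n))).
  assert (Ha : forall k, 0 <= a k) by (intros; apply Cmod_ge_0).
  apply is_lim_seq_Reals. intros eps Heps.
  set (e := eps / (8 * (K + 1))).
  assert (He : e > 0) by (unfold e; apply Rdiv_lt_0_compat; lra).
  destruct (block c f th0 th1 Hth0 HM0 Hth1 HM1 Hunif e He) as [N0 HN0].
  exists (2 * (N0 + 2))%nat. intros t Ht. unfold R_dist.
  rewrite Rminus_0_r, Cmod_mult, Cmod_R. rewrite (Rabs_right (INR t)) by (apply Rle_ge, pos_INR).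
  fold (a t). rewrite Rabs_right by (apply Rle_ge, Rmult_le_pos; [apply pos_INR | apply Ha]).
  assert (Hp : exists p, (t = 2 * p \/ t = 2 * p + 1)%nat).
  { destruct (Nat.Even_or_Odd t) as [[p Hp]|[p Hp]]; exists p; lia. }
  destruct Hp as [p Hp].
  assert (Hsum : sum_n_m a (S p) (2 * t) <= e) by (apply HN0; lia).
  assert (C1 : INR (t - p) * a t <= (K + 1) * sum_n_m (fun m => a m + a (2 * m)%nat) (S p) t).
  { replace (INR (t - p) * a t) with (sum_n_m (fun _ => a t) (S p) t).
    2: { rewrite sum_n_m_const. f_equal. }
    rewrite <- sum_scal. apply sum_le_loc. intros m Hm.
    apply (nb_point (fun n => c (Z.of_nat n)) K HK HNB m t); lia. }
  assert (C2 : sum_n_m (fun m => a m + a (2 * m)%nat) (S p) t <= 2 * sum_n_m a (S p) (2 * t)).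
  { rewrite sum_plusR.
    assert (sum_n_m a (S p) t <= sum_n_m a (S p) (2 * t)) by (apply sum_ext_right; auto; lia).
    assert (sum_n_m (fun m => a (2 * m)%nat) (S p) t <= sum_n_m a (S p) (2 * t)).
    { replace t with (S p + (t - S p))%nat at 1 by lia.
      eapply Rle_trans. apply sum_double. exact Ha.
      replace (2 * (S p + (t - S p)))%nat with (2 * t)%nat by lia.
      apply sum_ext_left. exact Ha. lia. }
    lra. }
  assert (Ht2 : INR t <= 2 * INR (t - p)).
  { replace 2 with (INR 2) by (simpl; ring). rewrite <- mult_INR. apply le_INR. lia. }
  assert (HK1 : 0 < K + 1) by lra.
  assert (Hfin : INR t * a t <= 4 * (K + 1) * e).
  { pose proof (Ha t).
    assert (INR t * a t <= 2 * (INR (t - p) * a t)) by nra.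
    assert ((K + 1) * sum_n_m (fun m => a m + a (2 * m)%nat) (S p) t <= (K + 1) * (2 * e)).
    { apply Rmult_le_compat_l. lra. lra. }
    lra. }
  assert (4 * (K + 1) * e = eps / 2) by (unfold e; field; lra).
  lra.
Qed.
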